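(* For every positive integer $n$, $$b^{2}_{3,8}(2n+1)\equiv 2\,b_{2,3}(n)\pmod 3.$$
   Context: For integers $r\ge1$ write $f_r=\prod_{j\ge1}(1-q^{rj})$. For coprime positive integers $\ell,m$ and a positive integer $k$, $b^{k}_{\ell,m}(n)$ denotes the number of $k$-colored partitions of $n$ into parts not divisible by $\ell$ or by $m$, i.e. $\sum_{n\ge0} b^{k}_{\ell,m}(n)q^n=\dfrac{f_\ell^k f_m^k}{f_1^k f_{\ell m}^k}$, and $b_{\ell,m}=b^1_{\ell,m}$. Thus $\sum b^2_{3,8}(n)q^n=\dfrac{f_3^2f_8^2}{f_1^2f_{24}^2}$ and $\sum b_{2,3}(n)q^n=\dfrac{f_2f_3}{f_1f_6}$. *)

(* Defs.v *)
From mathcomp Require Import all_boot all_order all_algebra.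
Set Implicit Arguments. Unset Strict Implicit. Unset Printing Implicit Defensive.
Import GRing.Theory.
Local Open Scope ring_scope.

Definition geom_trunc (N j : nat) : {poly int} := \sum_(i < N.+1) 'X^(i * j).

(* Truncated generating function of k-colored partitions into parts not
   divisible by l nor by m:  prod_{j >= 1, l !| j, m !| j} (1 - q^j)^(-k),
   keeping only parts j <= N and truncating each geometric factor at degree N.
   Its coefficients of degree <= N agree with the full infinite product. *)
Definition bpoly (k l m N : nat) : {poly int} :=
  \prod_(1 <= j < N.+1 | ~~ (l %| j)%N && ~~ (m %| j)%N) (geom_trunc N j) ^+ k.

(* b^k_{l,m}(n) : coefficient of q^n in f_l^k f_m^k / (f_1^k f_{lm}^k)
   (for coprime l, m this equals prod_{l !| j, m !| j} (1-q^j)^(-k)). *)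
Definition bklm (k l m n : nat) : int := (bpoly k l m n)`_n.

(* Main.v *)
Require Import Defs.
From mathcomp Require Import all_boot all_order all_algebra.
From mathcomp Require Import zify ring.
Set Implicit Arguments. Unset Strict Implicit. Unset Printing Implicit Defensive.
Import GRing.Theory.
Local Open Scope ring_scope.

Section Trunc.
Variable R : comNzRingType.
Implicit Types p q r u : {poly R}.

Definition eqt (M : nat) p q := forall i, (i < M)%N -> p`_i = q`_i.

Lemma eqt_refl M p : eqt M p p. Proof. by []. Qed.
Lemma eqt_sym M p q : eqt M p q -> eqt M q p.
Proof. by move=> h i hi; rewrite h. Qed.
Lemma eqt_trans M p q r : eqt M p q -> eqt M q r -> eqt M p r.
Proof. by move=> h1 h2 i hi; rewrite h1 // h2. Qed.
Lemma eqt_le M N p q : (N <= M)%N -> eqt M p q -> eqt N p q.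
Proof. by move=> hN h i hi; apply: h; apply: leq_trans hN. Qed.
Lemma eqt_add M p q p' q' : eqt M p p' -> eqt M q q' -> eqt M (p + q) (p' + q').
Proof. by move=> h1 h2 i hi; rewrite !coefD h1 // h2. Qed.
Lemma eqt_opp M p q : eqt M p q -> eqt M (- p) (- q).
Proof. by move=> h i hi; rewrite !coefN h. Qed.
Lemma eqt_mul M p q p' q' : eqt M p p' -> eqt M q q' -> eqt M (p * q) (p' * q').
Proof.
move=> h1 h2 i hi; rewrite !coefM; apply: eq_bigr => j _.
have hj : (j < M)%N by apply: leq_ltn_trans hi; rewrite -ltnS.
rewrite h1 // h2 //; apply: leq_ltn_trans hi; exact: leq_subr.
Qed.
Lemma eqt_mull M p q r : eqt M p q -> eqt M (r * p) (r * q).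
Proof. exact: eqt_mul. Qed.
Lemma eqt_mulr M p q r : eqt M p q -> eqt M (p * r) (q * r).
Proof. by move=> h; apply: eqt_mul. Qed.
Lemma eqt_exp M p q n : eqt M p q -> eqt M (p ^+ n) (q ^+ n).
Proof.
move=> h; elim: n => [|n ih]; first by rewrite !expr0.
by rewrite !exprS; apply: eqt_mul.
Qed.
Lemma eqt_prod M n (F G : nat -> {poly R}) :
  (forall i, (i < n)%N -> eqt M (F i) (G i)) ->
  eqt M (\prod_(i < n) F i) (\prod_(i < n) G i).
Proof.
elim: n => [|n ih] h; first by rewrite !big_ord0.
rewrite !big_ord_recr /=; apply: eqt_mul; last exact: h.
by apply: ih => i hi; apply: h; apply: ltnW.
Qed.

Lemma eqt_Xn0 M k p : (M <= k)%N -> eqt M ('X^k * p) 0.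
Proof.
move=> hk i hi; rewrite coefXnM coef0.
by have -> : (i < k)%N by apply: leq_trans hk.
Qed.

Lemma eqt_shiftl M s p q : eqt M p q -> eqt (s + M) ('X^s * p) ('X^s * q).
Proof.
move=> h i hi; rewrite !coefXnM; case: ltnP => // hsi.
by apply: h; rewrite ltn_subLR.
Qed.

Lemma eqt_shift M s p q : eqt (s + M) ('X^s * p) ('X^s * q) -> eqt M p q.
Proof.
move=> h i hi; move: (h (s + i)%N); rewrite ltn_add2l => /(_ hi).
by rewrite !coefXnM ltnNge leq_addr /= addKn.
Qed.

Lemma eqt_cancel M p q u : u`_0 = 1 -> eqt M (p * u) (q * u) -> eqt M p q.
Proof.
move=> u0 h.
have key : forall i, (i < M)%N -> (forall j, (j < i)%N -> p`_j = q`_j) -> p`_i = q`_i.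
  move=> i hi hlt; have := h i hi; rewrite !coefM big_ord_recr /= subnn u0 !mulr1.
  rewrite [in X in _ = X]big_ord_recr /= subnn u0 mulr1.
  have -> : \sum_(j < i) p`_j * u`_(i - j) = \sum_(j < i) q`_j * u`_(i - j).
    by apply: eq_bigr => j _; rewrite hlt.
  by move/addrI.
move=> i; elim: i {-2}i (leqnn i) => [|n ih] i hin hi.
  apply: key => // j; by rewrite ltnNge (leq_trans hin) // leq0n.
apply: key => // j hj; apply: ih; last by apply: ltn_trans hi.
by rewrite -ltnS (leq_trans hj).
Qed.

Lemma coef0_prod n (F : nat -> {poly R}) :
  (forall i, (i < n)%N -> (F i)`_0 = 1) -> (\prod_(i < n) F i)`_0 = 1.
Proof.
elim: n => [|n ih] h; first by rewrite big_ord0 coef1.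
rewrite big_ord_recr /= coef0M ih ?h ?mul1r // => i hi; apply: h; exact: ltnW.
Qed.

Lemma prod_stab M m t (F : nat -> {poly R}) :
  (m <= t)%N -> (forall i, (m <= i)%N -> eqt M (F i) 1) ->
  eqt M (\prod_(i < t) F i) (\prod_(i < m) F i).
Proof.
move=> hmt h; elim: t hmt => [|t ih] hmt.
  by move: hmt; rewrite leqn0 => /eqP ->.
case: (ltnP m t.+1) => hm.
  rewrite big_ord_recr /= -[X in eqt _ _ X]mulr1; apply: eqt_mul; first exact: ih.
  exact: h.
have -> : m = t.+1 by apply/eqP; rewrite eqn_leq hmt.
exact: eqt_refl.
Qed.

End Trunc.

Section QBin.
Variable R : comNzRingType.
Implicit Types q z : R.

Fixpoint qbin q (m j : nat) : R :=
  match m, j with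
  | _, 0 => 1
  | 0, _.+1 => 0
  | m'.+1, j'.+1 => qbin q m' j' + q ^+ j'.+1 * qbin q m' j'.+1
  end.

Arguments qbin q m j : simpl never.

Lemma qbin0 q m : qbin q m 0 = 1. Proof. by case: m. Qed.
Lemma qbinS q m j : qbin q m.+1 j.+1 = qbin q m j + q ^+ j.+1 * qbin q m j.+1.
Proof. by []. Qed.
Lemma qbin_gt q m j : (m < j)%N -> qbin q m j = 0.
Proof.
elim: m j => [|m ih] [|j] // h.
by rewrite qbinS !ih ?mulr0 ?addr0 // ltnW.
Qed.

Definition qpoch q (t : nat) : R := \prod_(i < t) (1 - q ^+ i.+1).

Lemma qpochS q t : qpoch q t.+1 = qpoch q t * (1 - q ^+ t.+1).
Proof. by rewrite /qpoch big_ord_recr. Qed.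
Lemma qpoch0 q : qpoch q 0 = 1.
Proof. by rewrite /qpoch big_ord0. Qed.

Lemma qbin_fact q m j : (j <= m)%N ->
  qbin q m j * qpoch q j * qpoch q (m - j) = qpoch q m.
Proof.
elim: m j => [|m ih] [|j] hj.
- by rewrite qbin0 qpoch0 !mul1r.
- by [].
- by rewrite qbin0 mul1r qpoch0 mul1r subn0.
rewrite qbinS subSS qpochS [qpoch q m.+1]qpochS.
have E1 := ih j hj.
case: (ltnP j m) => hjm.
  have E2 := ih j.+1 hjm.
  have hm : (m - j = (m - j.+1).+1)%N by lia.
  rewrite hm qpochS in E1 *; rewrite qpochS in E2.
  set a := qbin q m j in E1 *; set b := qbin q m j.+1 in E2 *.
  set Pj := qpoch q j in E1 E2 *; set P3 := qpoch q (m - j.+1) in E1 E2 *.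
  transitivity ((a * Pj * (P3 * (1 - q ^+ (m - j.+1).+1))) * (1 - q ^+ j.+1) +
     q ^+ j.+1 * (b * (Pj * (1 - q ^+ j.+1)) * P3) * (1 - q ^+ (m - j.+1).+1)).
    ring.
  rewrite E1 E2 -hm; have -> : (m.+1 = j.+1 + (m - j))%N by lia.
  rewrite exprD; ring.
have ejm : j = m by apply/eqP; rewrite eqn_leq hjm -ltnS hj.
subst j; rewrite subnn (@qbin_gt q m m.+1 (ltnSn m)) mulr0 addr0 qpoch0 mulr1.
move: E1; rewrite subnn qpoch0 mulr1 => E1.
by rewrite mulrA E1.
Qed.

Definition ee (j b : nat) : nat := if (b <= j)%N then 'C(j - b, 2) else 'C(b - j + 1, 2).

Lemma bin2S n : 'C(n.+1, 2) = ('C(n, 2) + n)%N.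
Proof. by rewrite binS bin1. Qed.

Lemma ee_succ j b : ee j b = ee j.+1 b.+1.
Proof. by rewrite /ee ltnS subSS. Qed.

Lemma ee_step j b : (b.+1 + ee j.+1 b = ee j.+1 b.+1 + j.+1)%N.
Proof.
rewrite /ee ltnS subSS; case: (leqP b j) => h2.
  rewrite (_ : (b <= j.+1)%N = true); last by lia.
  rewrite (_ : (j.+1 - b = (j - b).+1)%N); last by lia.
  rewrite bin2S; lia.
case: (leqP b j.+1) => h1.
  have -> : b = j.+1 by lia.
  rewrite subnn (_ : (j.+2 - j.+1 + 1 = 2)%N); last by lia.
  rewrite bin0n binn /=; lia.
rewrite (_ : (b.+1 - j.+1 + 1 = (b - j.+1 + 1).+1)%N); last by lia.
rewrite bin2S; lia.
Qed.

Lemma ee0 b : ee 0 b.+1 = (ee 0 b + b.+1)%N.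
Proof.
rewrite /ee ltn0 subn0 addn1 bin2S; case: b => [|b].
  by rewrite bin0n.
by rewrite ltn0 subn0 addn1.
Qed.

Lemma sum_shift1 (f : nat -> R) m : f m.+1 = 0 ->
  \sum_(j < m.+1) f j.+1 = \sum_(j < m.+1) f j - f 0%N.
Proof.
move=> h; rewrite big_ord_recr /= h addr0 [in RHS]big_ord_recl /=.
by rewrite addrC addKr.
Qed.

Lemma bump0' i : bump 0 i = i.+1. Proof. by []. Qed.

Lemma ee_S0 j : ee j.+1 0 = (ee j 0 + j)%N.
Proof. by rewrite /ee !subn0 bin2S. Qed.
Lemma ee00 : ee 0 0 = 0%N.
Proof. by rewrite /ee subn0 bin0n. Qed.

Lemma qbinomial q a z :
  \prod_(i < a) (1 + z * q ^+ i) = \sum_(j < a.+1) z ^+ j * q ^+ ee j 0 * qbin q a j.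
Proof.
elim: a z => [|a ih] z.
  by rewrite big_ord0 big_ord1 /= ee00 expr0 !mulr1.
rewrite big_ord_recl /= expr0 mulr1.
have -> : \prod_(i < a) (1 + z * q ^+ (lift ord0 i)) = \prod_(i < a) (1 + (z * q) * q ^+ i).
  by apply: eq_bigr => i _; rewrite lift0 exprS mulrA.
rewrite ih [in RHS]big_ord_recl /= ee00 qbin0 !expr0 !mulr1.
under [in RHS]eq_bigr => j _ do rewrite bump0' qbinS mulrDr.
rewrite big_split mulrDl mul1r.
have -> : \sum_(i < a.+1) z ^+ i.+1 * q ^+ ee i.+1 0 * qbin q a i =
          z * \sum_(i < a.+1) ((z * q) ^+ i * q ^+ ee i 0 * qbin q a i).
  rewrite mulr_sumr; apply: eq_bigr => j _; rewrite ee_S0 exprS exprMn exprD; ring.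
set f := fun j => (z * q) ^+ j * q ^+ ee j 0 * qbin q a j.
have hf : forall j, z ^+ j.+1 * q ^+ ee j.+1 0 * (q ^+ j.+1 * qbin q a j.+1) = f j.+1.
  move=> j; rewrite /f ee_S0 exprMn exprD; ring.
under [in RHS]eq_bigr => j _ do rewrite hf.
rewrite (@sum_shift1 f); last by rewrite /f qbin_gt // mulr0.
rewrite /f expr0 ee00 qbin0 !mulr1; simpl; ring.
Qed.

Lemma jtp_finite q a b z :
  \prod_(i < a) (1 + z * q ^+ i) * \prod_(i < b) (z + q ^+ i.+1) =
  \sum_(j < (a + b).+1) z ^+ j * q ^+ ee j b * qbin q (a + b) j.
Proof.
elim: b => [|b ih].
  by rewrite big_ord0 mulr1 addn0 qbinomial.
rewrite big_ord_recr /= mulrA ih addnS.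
set m := (a + b)%N.
rewrite [in RHS]big_ord_recl /= qbin0 expr0 mul1r mulr1.
under [in RHS]eq_bigr => j _ do rewrite /= qbinS mulrDr.
rewrite big_split /= mulrDr.
have -> : \sum_(i < m.+1) z ^+ i.+1 * q ^+ ee i.+1 b.+1 * qbin q m i =
          (\sum_(j < m.+1) z ^+ j * q ^+ ee j b * qbin q m j) * z.
  rewrite mulr_suml; apply: eq_bigr => j _; rewrite -ee_succ exprS; ring.
set f := fun j => z ^+ j * q ^+ ee j b * qbin q m j.
have hf : forall j, z ^+ j.+1 * q ^+ ee j.+1 b.+1 * (q ^+ j.+1 * qbin q m j.+1) = q ^+ b.+1 * f j.+1.
  move=> j; rewrite /f.
  have E : q ^+ ee j.+1 b.+1 * q ^+ j.+1 = q ^+ b.+1 * q ^+ ee j.+1 b.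
    by rewrite -!exprD ee_step.
  transitivity (z ^+ j.+1 * (q ^+ ee j.+1 b.+1 * q ^+ j.+1) * qbin q m j.+1); first ring.
  rewrite E; ring.
under [in RHS]eq_bigr => j _ do rewrite hf.
rewrite -mulr_sumr (@sum_shift1 f); last by rewrite /f qbin_gt // mulr0.
rewrite /f expr0 qbin0 !mul1r mulr1 ee0 exprD; ring.
Qed.

End QBin.

Lemma bin2_double n : ('C(n, 2) * 2 = n * n.-1)%N.
Proof. elim: n => [|n ih]; first by rewrite bin0n. rewrite bin2S mulnDl ih /=; case: n {ih} => //= n; lia. Qed.

Section Spec.
Variable R : comNzRingType.

Lemma eqt_sum M n (F G : nat -> {poly R}) :
  (forall i, (i < n)%N -> eqt M (F i) (G i)) ->
  eqt M (\sum_(i < n) F i) (\sum_(i < n) G i).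
Proof.
elim: n => [|n ih] h; first by rewrite !big_ord0.
rewrite !big_ord_recr /=; apply: eqt_add; last exact: h.
by apply: ih => i hi; apply: h; apply: ltnW.
Qed.

Lemma split_mid (G : nat -> {poly R}) n :
  \sum_(j < (2 * n).+1) G j = G n + \sum_(k < n) (G (n + k).+1 + G (n - k).-1).
Proof.
elim: n G => [|n ih] G; first by rewrite big_ord1 big_ord0 addr0.
rewrite (_ : (2 * n.+1).+1 = ((2 * n).+1).+2)%N; last by lia.
rewrite big_ord_recl big_ord_recr /= (ih (fun j => G (bump 0 j))).
rewrite [in RHS]big_ord_recr /=.
have -> : \sum_(k < n) (G (bump 0 (n + k).+1) + G (bump 0 (n - k).-1)) =
          \sum_(k < n) (G (n.+1 + k).+1 + G (n.+1 - k).-1).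
  apply: eq_bigr => k _; rewrite /bump /= add1n addSn; congr (G _ + G _).
  have := ltn_ord k; lia.
have e1 : bump 0 n = n.+1 by [].
have e2 : bump 0 (2 * n).+1 = (n.+1 + n).+1 by rewrite /bump /=; lia.
have e3 : (n.+1 - n).-1 = 0%N by lia.
rewrite e1 e2 e3; ring.
Qed.

Lemma split_low (G : nat -> {poly R}) n :
  \sum_(j < 2 * n) G j = \sum_(l < n) (G (n + l)%N + G (n - l).-1).
Proof.
elim: n G => [|n ih] G; first by rewrite !big_ord0.
rewrite (_ : (2 * n.+1 = ((2 * n).+1).+1)%N); last by lia.
rewrite big_ord_recl big_ord_recr /= (ih (fun j => G (bump 0 j))).
rewrite [in RHS]big_ord_recr /=.
have -> : \sum_(k < n) (G (bump 0 (n + k)) + G (bump 0 (n - k).-1)) =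
          \sum_(k < n) (G (n.+1 + k)%N + G (n.+1 - k).-1).
  apply: eq_bigr => k _; rewrite /bump /= add1n addSn; congr (G _ + G _).
  have := ltn_ord k; lia.
have e2 : bump 0 (2 * n) = (n.+1 + n)%N by rewrite /bump /=; lia.
have e3 : (n.+1 - n).-1 = 0%N by lia.
rewrite e2 e3; ring.
Qed.

Lemma eqt_Xadd1 M e (p : {poly R}) : (M <= e)%N -> eqt M (1 + p * 'X^e) 1.
Proof.
move=> h; rewrite -[X in eqt _ _ X]addr0; apply: eqt_add; first exact: eqt_refl.
rewrite mulrC; exact: eqt_Xn0.
Qed.

Lemma eqt_Xsub1 M e : (M <= e)%N -> eqt M (1 - 'X^e : {poly R}) 1.
Proof. by move=> h; rewrite -mulN1r; apply: eqt_Xadd1. Qed.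

Lemma qpoch_Xk k t : qpoch ('X^k : {poly R}) t = \prod_(i < t) (1 - 'X^(k * i.+1)).
Proof. by apply: eq_bigr => i _; rewrite exprM. Qed.

Lemma qpoch_stab M k t : (0 < k)%N -> (M <= t)%N ->
  eqt M (qpoch ('X^k : {poly R}) t) (qpoch 'X^k M).
Proof.
move=> hk ht; rewrite !qpoch_Xk; apply: (@prod_stab _ M M t (fun i => 1 - 'X^(k * i.+1))) => // i hi.
apply: eqt_Xsub1; apply: (leq_trans hi); apply: (leq_trans (leqnSn i)).
by rewrite leq_pmull.
Qed.

Lemma qpoch_coef0 k t : (0 < k)%N -> (qpoch ('X^k : {poly R}) t)`_0 = 1.
Proof.
move=> hk; rewrite qpoch_Xk; apply: (@coef0_prod _ t (fun i => 1 - 'X^(k * i.+1))) => i _.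
have h0 : (0 == k * i.+1)%N = false by apply/negbTE; rewrite eq_sym -lt0n muln_gt0 hk.
by rewrite coefB coef1 coefXn h0 subr0.
Qed.

Lemma qbin_lim M k m j : (0 < k)%N -> (M <= j)%N -> (M <= m - j)%N ->
  eqt M (qbin ('X^k : {poly R}) m j * qpoch 'X^k M) 1.
Proof.
move=> hk hj hmj.
case: M hj hmj => [|M] hj hmj; first by [].
have hjm : (j <= m)%N by lia.
have F := qbin_fact ('X^k : {poly R}) hjm.
set P := qpoch ('X^k : {poly R}) M.+1.
apply: (@eqt_cancel _ _ _ _ P); first exact: qpoch_coef0.
rewrite mul1r.
have h1 : eqt M.+1 (qpoch 'X^k m) P by apply: qpoch_stab => //; lia.
apply: (eqt_trans _ h1); rewrite -F -!mulrA; apply: eqt_mull.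
apply: eqt_mul; apply: eqt_sym; exact: qpoch_stab.
Qed.

Definition Aps (s : R) L : {poly R} := \prod_(i < L) (1 + s%:P * 'X^((2 * i).+1)).
Definition thS (s : R) K : {poly R} := 1 + 2%:R * \sum_(k < K) s%:P ^+ k.+1 * 'X^(k.+1 ^ 2).

Lemma sgn_eq (S : {poly R}) a c : S * S = 1 -> S ^+ (a + 2 * c) = S ^+ a.
Proof. by move=> h; rewrite exprD exprM expr2 h expr1n mulr1. Qed.

Lemma Aps_stab s M n : (M <= n)%N -> eqt M (Aps s n) (Aps s M).
Proof.
move=> h; apply: (@prod_stab _ M M n (fun i => 1 + s%:P * 'X^((2 * i).+1))) => // i hi.
apply: eqt_Xadd1; lia.
Qed.

Lemma theta_spec M s : s * s = 1 ->
  eqt M (Aps s M ^+ 2 * qpoch 'X^2 M) (thS s M).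
Proof.
move=> hs.
set S := s%:P.
have hS : S * S = 1 by rewrite -polyCM hs.
set n := (2 * M).+1.
have J := jtp_finite ('X^2 : {poly R}) n n (S * 'X).
have L1 : \prod_(i < n) (1 + S * 'X * ('X^2) ^+ i) = Aps s n.
  by apply: eq_bigr => i _; rewrite -exprM -mulrA -exprS.
have L2 : \prod_(i < n) (S * 'X + ('X^2) ^+ i.+1) = (S * 'X) ^+ n * Aps s n.
  transitivity (\prod_(i < n) (S * 'X * (1 + S * 'X^((2 * i).+1)))); last first.
    by rewrite big_split /= prodr_const card_ord.
  apply: eq_bigr => i _.
  rewrite -exprM mulrDr mulr1 (_ : (2 * i.+1 = 1 + (2 * i).+1)%N); last by lia.
  rewrite exprD expr1; transitivity (S * 'X + (S * S) * ('X * 'X^((2 * i).+1))); first by rewrite hS mul1r.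
  ring.
rewrite L1 L2 in J.
set P := qpoch ('X^2 : {poly R}) M.
suff H : eqt (n + M) ('X^n * (Aps s n ^+ 2 * P)) ('X^n * thS s M).
  have H2 := eqt_shift H.
  apply: eqt_trans H2; apply: eqt_mulr; apply: eqt_exp; apply: eqt_sym; apply: Aps_stab; lia.
set G := fun j => S ^+ n * ((S * 'X) ^+ j * ('X^2) ^+ ee j n * qbin ('X^2) (n + n) j) * P.
have HL : 'X^n * (Aps s n ^+ 2 * P) = \sum_(j < (2 * n).+1) G j.
  rewrite mul2n -addnn /G -mulr_suml -mulr_sumr -J.
  transitivity ((S ^+ n * S ^+ n) * ('X^n * (Aps s n ^+ 2 * P))); last by rewrite exprMn; ring.
  by rewrite -exprMn hS expr1n mul1r.
rewrite HL split_mid.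
have HR : 'X^n * thS s M = 'X^n + \sum_(k < n) (if (k < M)%N then 'X^(n + k.+1 ^ 2) * (S ^+ k.+1 * 2%:R) else 0).
  rewrite -big_mkcond /= -(big_ord_widen n (fun k => 'X^(n + k.+1 ^ 2) * (S ^+ k.+1 * 2%:R))); last by lia.
  rewrite /thS mulrDr mulr1 mulr_sumr mulr_sumr; congr (_ + _); apply: eq_bigr => k _.
  rewrite exprD; ring.
rewrite HR; apply: eqt_add.
  rewrite /G.
  have -> : S ^+ n * ((S * 'X) ^+ n * ('X^2) ^+ ee n n * qbin ('X^2) (n + n) n) * P =
            'X^n * (qbin ('X^2) (n + n) n * P).
    rewrite /ee leqnn subnn bin0n expr0 mulr1 exprMn.
    transitivity ((S ^+ n * S ^+ n) * ('X^n * (qbin ('X^2) (n + n) n * P))); first ring.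
    by rewrite -exprMn hS expr1n mul1r.
  rewrite -[X in eqt _ _ X]mulr1; apply: eqt_shiftl; apply: qbin_lim => //; lia.
apply: (eqt_sum (F := fun k => G (n + k).+1 + G (n - k).-1) (G := fun k => if (k < M)%N then 'X^(n + k.+1 ^ 2) * (S ^+ k.+1 * 2%:R) else 0)) => k hk.
have E1 : ((n + k).+1 + 2 * ee (n + k).+1 n = n + k.+1 ^ 2)%N.
  rewrite /ee (_ : (n <= (n + k).+1)%N = true); last by lia.
  rewrite (_ : ((n + k).+1 - n = k.+1)%N); last by lia.
  have := bin2_double k.+1; lia.
have E2 : ((n - k).-1 + 2 * ee (n - k).-1 n = n + k.+1 ^ 2)%N.
  rewrite /ee (_ : (n <= (n - k).-1)%N = false); last by lia.
  rewrite (_ : (n - (n - k).-1 + 1 = k.+2)%N); last by lia.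
  have := bin2_double k.+2; lia.
have G1 : G (n + k).+1 = 'X^(n + k.+1 ^ 2) * (S ^+ k.+1 * (qbin ('X^2) (n + n) (n + k).+1 * P)).
  rewrite /G exprMn -exprM.
  have eX : 'X^((n + k).+1) * 'X^(2 * ee (n + k).+1 n) = 'X^(n + k.+1 ^ 2) :> {poly R}.
    by rewrite -exprD E1.
  have eS : S ^+ n * S ^+ (n + k).+1 = S ^+ k.+1.
    by rewrite -exprD (_ : (n + (n + k).+1 = k.+1 + 2 * n)%N) ?sgn_eq //; lia.
  transitivity ((S ^+ n * S ^+ (n + k).+1) * ('X^((n + k).+1) * 'X^(2 * ee (n + k).+1 n)) *
     (qbin ('X^2) (n + n) (n + k).+1 * P)); first ring.
  rewrite eX eS; ring.
have G2 : G (n - k).-1 = 'X^(n + k.+1 ^ 2) * (S ^+ k.+1 * (qbin ('X^2) (n + n) (n - k).-1 * P)).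
  rewrite /G exprMn -exprM.
  have eX : 'X^((n - k).-1) * 'X^(2 * ee (n - k).-1 n) = 'X^(n + k.+1 ^ 2) :> {poly R}.
    by rewrite -exprD E2.
  have eS : S ^+ n * S ^+ (n - k).-1 = S ^+ k.+1.
    by rewrite -exprD (_ : (n + (n - k).-1 = k.+1 + 2 * (n - k.+1))%N) ?sgn_eq //; lia.
  transitivity ((S ^+ n * S ^+ (n - k).-1) * ('X^((n - k).-1) * 'X^(2 * ee (n - k).-1 n)) *
     (qbin ('X^2) (n + n) (n - k).-1 * P)); first ring.
  rewrite eX eS; ring.
rewrite G1 G2 -mulrDr -mulrDr.
case: ifP => hkM.
  apply: (@eqt_le _ (n + k.+1 ^ 2 + M)); first lia.
  apply: eqt_shiftl; apply: eqt_mull; rewrite -[2%:R]/(1 + 1 : {poly R}).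
  by apply: eqt_add; apply: qbin_lim => //; lia.
by apply: eqt_Xn0; lia.
Qed.

Definition Dps L : {poly R} := \prod_(i < L) (1 + 'X^(i.+1)).
Definition psiS K : {poly R} := \sum_(l < K) 'X^('C(l.+1, 2)).

Lemma Dps_stab M n : (M <= n)%N -> eqt M (Dps n) (Dps M).
Proof.
move=> h; apply: (@prod_stab _ M M n (fun i => 1 + 'X^(i.+1))) => // i hi.
have -> : (1 + 'X^(i.+1) : {poly R}) = 1 + 1 * 'X^(i.+1) by rewrite mul1r.
apply: eqt_Xadd1; lia.
Qed.

Lemma qbin_lim1 M m j : (M <= j)%N -> (M <= m - j)%N ->
  eqt M (qbin ('X : {poly R}) m j * qpoch 'X M) 1.
Proof. by move=> h1 h2; have := @qbin_lim M 1 m j (ltn0Sn 0) h1 h2; rewrite expr1. Qed.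

Lemma psi_spec M : eqt M (2%:R * (Dps M ^+ 2 * qpoch 'X M)) (2%:R * psiS M).
Proof.
set n' := (2 * M)%N; set n := n'.+1.
have J := jtp_finite ('X : {poly R}) n n 'X.
have L1 : \prod_(i < n) (1 + 'X * 'X ^+ i) = Dps n :> {poly R}.
  by apply: eq_bigr => i _; rewrite -exprS.
have L2 : \prod_(i < n) ('X + 'X ^+ i.+1) = 'X^n * (2%:R * Dps n') :> {poly R}.
  transitivity (\prod_(i < n) ('X * (1 + 'X ^+ i)) : {poly R}).
    by apply: eq_bigr => i _; rewrite mulrDr mulr1 -exprS.
  rewrite big_split /= prodr_const card_ord big_ord_recl expr0; congr (_ * (_ * _)).

rewrite L1 L2 in J.
set P := qpoch ('X : {poly R}) M.
suff H : eqt (n + M) ('X^n * (2%:R * (Dps n * Dps n' * P))) ('X^n * (2%:R * psiS M)).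
  have H2 := eqt_shift H.
  apply: eqt_trans H2; apply: eqt_mull; apply: eqt_mulr; rewrite expr2.
  by apply: eqt_mul; apply: eqt_sym; apply: Dps_stab; lia.
set G := fun j => 'X ^+ j * 'X ^+ ee j n * qbin 'X (n + n) j * P.
have HL : 'X^n * (2%:R * (Dps n * Dps n' * P)) = \sum_(j < (n + n).+1) G j.
  rewrite /G -mulr_suml -J; ring.
rewrite HL big_ord_recr /= addnn -mul2n split_low.
have HR : 'X^n * (2%:R * psiS M) =
   \sum_(l < n) (if (l < M)%N then 'X^(n + 'C(l.+1, 2)) * 2%:R else 0) + 0.
  rewrite addr0 -big_mkcond /= -(big_ord_widen n (fun l => 'X^(n + 'C(l.+1, 2)) * 2%:R)); last by lia.
  rewrite /psiS !mulr_sumr; apply: eq_bigr => l _; rewrite exprD; ring.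
rewrite HR; apply: eqt_add; last first.
  rewrite /G -!exprD -!mulrA; apply: eqt_Xn0; lia.
apply: (eqt_sum (F := fun l => G (n + l)%N + G (n - l).-1)
   (G := fun l => if (l < M)%N then 'X^(n + 'C(l.+1, 2)) * 2%:R else 0)) => l hl.
have E1 : (n + l + ee (n + l) n = n + 'C(l.+1, 2))%N.
  rewrite /ee (_ : (n <= n + l)%N = true); last by lia.
  rewrite (_ : (n + l - n = l)%N); last by lia.
  rewrite bin2S; lia.
have E2 : ((n - l).-1 + ee (n - l).-1 n = n + 'C(l.+1, 2))%N.
  rewrite /ee (_ : (n <= (n - l).-1)%N = false); last by lia.
  rewrite (_ : (n - (n - l).-1 + 1 = l.+2)%N); last by lia.
  rewrite !bin2S; lia.
have G1 : G (n + l)%N = 'X^(n + 'C(l.+1, 2)) * (qbin 'X (n + n) (n + l) * P).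
  by rewrite /G -exprD E1 mulrA.
have G2 : G (n - l).-1 = 'X^(n + 'C(l.+1, 2)) * (qbin 'X (n + n) (n - l).-1 * P).
  by rewrite /G -exprD E2 mulrA.
rewrite G1 G2 -mulrDr.
case: ifP => hlM.
  apply: (@eqt_le _ (n + 'C(l.+1, 2) + M)); first lia.
  apply: eqt_shiftl; rewrite -[2%:R]/(1 + 1 : {poly R}).
  by apply: eqt_add; apply: qbin_lim1; lia.
by apply: eqt_Xn0; rewrite bin2S; lia.
Qed.

End Spec.

Section Rel.
Variable R : comNzRingType.

Lemma prod_pairs L (f : nat -> {poly R}) :
  \prod_(i < 2 * L) f i = \prod_(i < L) (f (2 * i)%N * f (2 * i).+1).
Proof.
elim: L => [|L ih]; first by rewrite !big_ord0.
rewrite (_ : (2 * L.+1 = (2 * L).+2)%N); last by lia.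
by rewrite !big_ord_recr /= ih mulrA.
Qed.

Lemma sum_pairs L (f : nat -> {poly R}) :
  \sum_(i < 2 * L) f i = \sum_(i < L) (f (2 * i)%N + f (2 * i).+1).
Proof.
elim: L => [|L ih]; first by rewrite !big_ord0.
rewrite (_ : (2 * L.+1 = (2 * L).+2)%N); last by lia.
by rewrite !big_ord_recr /= ih addrA.
Qed.

Lemma comp_prod (r : {poly R}) L (f : 'I_L -> {poly R}) :
  (\prod_(i < L) f i) \Po r = \prod_(i < L) (f i \Po r).
Proof. exact: (rmorph_prod (comp_poly r)). Qed.

Lemma comp_sum (r : {poly R}) L (f : 'I_L -> {poly R}) :
  (\sum_(i < L) f i) \Po r = \sum_(i < L) (f i \Po r).
Proof. exact: (rmorph_sum (comp_poly r)). Qed.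

Lemma comp_Xn (e d : nat) : ('X^e : {poly R}) \Po 'X^d = 'X^(d * e).
Proof. by rewrite rmorphXn /= comp_polyX exprM. Qed.

Definition F k L : {poly R} := qpoch ('X^k) L.
Definition Cc L : {poly R} := \prod_(i < L) (1 - 'X^(2 * (2 * i).+1)).
Definition D2 L : {poly R} := \prod_(i < L) (1 + 'X^(2 * i.+1)).

Lemma F_comp k L : F k L \Po 'X^2 = F (2 * k) L.
Proof.
rewrite /F !qpoch_Xk comp_prod; apply: eq_bigr => i _.
by rewrite comp_polyB comp_polyC comp_Xn mulnA.
Qed.

Lemma Dps_comp L : Dps R L \Po 'X^2 = D2 L.
Proof.
rewrite /Dps comp_prod; apply: eq_bigr => i _.
by rewrite comp_polyD comp_polyC comp_Xn.
Qed.

Lemma relA L : F 1 (2 * L) = Aps (-1) L * F 2 L.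
Proof.
rewrite /F !qpoch_Xk (prod_pairs L (fun i => 1 - 'X^(1 * i.+1))) /Aps -big_split /=; apply: eq_bigr => i _.
by rewrite polyCN polyC1 mulN1r !mul1n (_ : (2 * i).+2 = 2 * i.+1)%N; last by lia.
Qed.

Lemma relB L : F 2 (2 * L) = Cc L * F 4 L.
Proof.
rewrite /F !qpoch_Xk (prod_pairs L (fun i => 1 - 'X^(2 * i.+1))) /Cc -big_split /=; apply: eq_bigr => i _.
by rewrite (_ : (2 * (2 * i).+2 = 4 * i.+1)%N); last by lia.
Qed.

Lemma relC L : Aps (-1) L * Aps 1 L = Cc L.
Proof.
rewrite /Aps /Cc -big_split /=; apply: eq_bigr => i _.
rewrite polyCN polyC1 mulN1r mul1r (mulnC 2 (2 * i).+1) exprM; ring.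
Qed.

Lemma relD L : D2 L * F 2 L = F 4 L.
Proof.
rewrite /F !qpoch_Xk /D2 -big_split /=; apply: eq_bigr => i _.
rewrite (_ : (4 * i.+1 = (2 * i.+1) * 2)%N); last by lia.
rewrite (exprM _ (2 * i.+1) 2); ring.
Qed.

Lemma relD1 L : Dps R L * F 1 L = F 2 L.
Proof.
rewrite /F !qpoch_Xk /Dps -big_split /=; apply: eq_bigr => i _.
rewrite mul1n (mulnC 2) exprM; ring.
Qed.

Lemma dissect K :
  thS (-1) (2 * K) = (thS 1 K \Po 'X^4) - 2%:R * 'X * (psiS R K \Po 'X^8).
Proof.
rewrite /thS /psiS (sum_pairs K (fun k => (-1)%:P ^+ k.+1 * 'X^(k.+1 ^ 2))).
rewrite comp_polyD rmorph1 rmorphM /= rmorph_nat !comp_sum.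
rewrite polyC1.
have -> : \sum_(i < K) (((1 : {poly R}) ^+ i.+1 * 'X^(i.+1 ^ 2)) \Po 'X^4) =
          \sum_(i < K) ('X^((2 * i).+2 ^ 2) : {poly R}).
  apply: eq_bigr => i _; rewrite expr1n mul1r comp_Xn; congr ('X^_); lia.
have -> : \sum_(i < K) (('X^('C(i.+1, 2)) : {poly R}) \Po 'X^8) =
          \sum_(i < K) ('X^(8 * 'C(i.+1, 2))).
  by apply: eq_bigr => i _; rewrite comp_Xn.
rewrite !mulr_sumr -addrA -sumrB; congr (_ + _); apply: eq_bigr => i _.
rewrite polyCN polyC1.
have m1sq : (-1 : {poly R}) ^+ 2 = 1 by rewrite expr2 mulrNN mulr1.
have s1 : (-1 : {poly R}) ^+ (2 * i).+1 = -1 by rewrite exprS exprM m1sq expr1n mulr1.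
have s2 : (-1 : {poly R}) ^+ (2 * i).+2 = 1.
  by rewrite (_ : ((2 * i).+2 = 2 * i.+1)%N) ?exprM ?m1sq ?expr1n //; lia.
rewrite s1 s2 (_ : ((2 * i).+1 ^ 2 = 1 + 8 * 'C(i.+1, 2))%N); last first.
  have := bin2_double i.+1; simpl; nia.
rewrite exprD expr1; ring.
Qed.

Definition od (p : {poly R}) : {poly R} := \poly_(i < size p) p`_(2 * i).+1.

Lemma coef_od p i : (od p)`_i = p`_(2 * i).+1.
Proof.
rewrite coef_poly; case: ltnP => // h.
by rewrite nth_default //; apply: (leq_trans h); lia.
Qed.

Lemma od_add p q : od (p + q) = od p + od q.
Proof. by apply/polyP => i; rewrite coefD !coef_od coefD. Qed.
Lemma od_opp p : od (- p) = - od p.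
Proof. by apply/polyP => i; rewrite coefN !coef_od coefN. Qed.
Lemma od1 : od 1 = 0.
Proof. by apply/polyP => i; rewrite coef_od coef1 coef0. Qed.
Lemma odX : od 'X = 1.
Proof. by apply/polyP => i; rewrite coef_od coefX coef1; case: i. Qed.

Lemma sum_pairs_gen (V : nmodType) L (f : nat -> V) :
  \sum_(i < 2 * L) f i = \sum_(i < L) (f (2 * i)%N + f (2 * i).+1).
Proof.
elim: L => [|L ih]; first by rewrite !big_ord0.
rewrite (_ : (2 * L.+1 = (2 * L).+2)%N); last by lia.
by rewrite !big_ord_recr /= ih addrA.
Qed.

Lemma od_mul_comp a b : od ((a \Po 'X^2) * b) = a * od b.
Proof.
apply/polyP => i; rewrite coef_od !coefM.
rewrite (_ : (2 * i).+2 = 2 * i.+1)%N; last by lia.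
rewrite (sum_pairs_gen i.+1 (fun j => (a \Po 'X^2)`_j * b`_((2 * i).+1 - j))).
apply: eq_bigr => l _.
rewrite !coef_comp_poly_Xn // coef_od.
rewrite (_ : (2 %| 2 * l)%N = true); last by apply/dvdnP; exists (nat_of_ord l); lia.
rewrite (_ : (2 %| (2 * l).+1)%N = false); last by rewrite dvdn2 /= oddM.
rewrite mulKn // mul0r addr0; congr (_ * b`_ _).
have := ltn_ord l; lia.
Qed.

Lemma eqt_od M (p q : {poly R}) : eqt (2 * M) p q -> eqt M (od p) (od q).
Proof. by move=> h i hi; rewrite !coef_od; apply: h; lia. Qed.

Lemma eqt_comp2 M (p q : {poly R}) : eqt M p q -> eqt (2 * M) (p \Po 'X^2) (q \Po 'X^2).
Proof.
move=> h i hi; rewrite !coef_comp_poly_Xn //; case: ifP => // /dvdnP [k ek]; subst i.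
by rewrite mulnK //; apply: h; lia.
Qed.

End Rel.

Section Main.
Variable R : comNzRingType.

Lemma qpoch_stab2 M' k m t : (0 < k)%N -> (m <= t)%N -> (M' <= k * m.+1)%N ->
  eqt M' (qpoch ('X^k : {poly R}) t) (qpoch 'X^k m).
Proof.
move=> hk hmt hM; rewrite !qpoch_Xk.
apply: (@prod_stab _ M' m t (fun i => 1 - 'X^(k * i.+1))) => // i hi.
apply: eqt_Xsub1; apply: (leq_trans hM); rewrite leq_mul2l ltnS hi orbT //.
Qed.

Lemma Aps_stab2 M' (s : R) m n : (m <= n)%N -> (M' <= (2 * m).+1)%N ->
  eqt M' (Aps s n) (Aps s m).
Proof.
move=> h hM; apply: (@prod_stab _ M' m n (fun i => 1 + s%:P * 'X^((2 * i).+1))) => // i hi.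
apply: eqt_Xadd1; lia.
Qed.

Lemma eqt_eq M (p q : {poly R}) : p = q -> eqt M p q.
Proof. by move=> ->. Qed.

Lemma Yid M : eqt M (2%:R * (thS 1 M * (psiS R M \Po 'X^2) * F R 1 M ^+ 2))
                    (2%:R * F R 2 M ^+ 4).
Proof.
have S2 := @theta_spec R M 1 (mulr1 (1 : R)).
have S3 := eqt_le (leq_pmull M (ltn0Sn 1)) (eqt_comp2 (@psi_spec R M)).
have c1 : (2%:R * (Dps R M ^+ 2 * qpoch 'X M)) \Po 'X^2 = 2%:R * (D2 R M ^+ 2 * F R 2 M).
  rewrite comp_polyM rmorph_nat comp_polyM rmorphXn /= Dps_comp.
  by change (qpoch 'X M) with (F R 1 M); rewrite F_comp.
have c2 : (2%:R * psiS R M) \Po 'X^2 = 2%:R * (psiS R M \Po 'X^2).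
  by rewrite comp_polyM rmorph_nat.
rewrite c1 c2 in S3.
change (qpoch ('X^2) M) with (F R 2 M) in S2.
have hF1 : eqt M (F R 1 M) (Aps (-1) M * F R 2 M).
  rewrite -relA; apply: eqt_sym; apply: qpoch_stab2 => //; lia.
have hCD : eqt M (Cc R M * D2 R M) 1.
  apply: (@eqt_cancel _ _ _ _ (F R 2 M)); first exact: qpoch_coef0.
  rewrite -mulrA relD -relB mul1r; apply: qpoch_stab2 => //; lia.
apply: (@eqt_trans _ _ _ (2%:R * ((Cc R M * D2 R M) ^+ 2 * F R 2 M ^+ 4))); last first.
  apply: eqt_mull; rewrite -[X in eqt _ _ X]mul1r; apply: eqt_mulr.
  by rewrite -(expr1n _ 2); apply: eqt_exp.
rewrite -relC.
have -> : 2%:R * (thS 1 M * (psiS R M \Po 'X^2) * F R 1 M ^+ 2) =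
   thS 1 M * (2%:R * (psiS R M \Po 'X^2)) * F R 1 M ^+ 2 by ring.
apply: (eqt_trans (eqt_mul (eqt_mul (eqt_sym S2) (eqt_sym S3)) (eqt_exp 2 hF1))).
apply: eqt_eq; ring.
Qed.


Lemma sq_split (U V : {poly R}) : (U \Po 'X^2 + 'X * (V \Po 'X^2)) ^+ 2 =
  ((U ^+ 2 + 'X * V ^+ 2) \Po 'X^2) * 1 + ((2%:R * (U * V)) \Po 'X^2) * 'X.
Proof. rewrite comp_polyD !comp_polyM comp_polyX rmorph_nat; ring. Qed.

Lemma OddF M : eqt M (od (F R 1 (2 * M) ^+ 4))
  (F R 1 M ^+ 2 * (2%:R * ((thS 1 M \Po 'X^2) * (- 2%:R * (psiS R M \Po 'X^4))))).
Proof.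
have hs : (-1 : R) * (-1) = 1 by rewrite mulrNN mulr1.
have S1 := @theta_spec R (2 * M) (-1) hs.
have hA : eqt (2 * M) (Aps (-1 : R) (2 * M)) (Aps (-1) M) by apply: Aps_stab2; lia.
have hQ : eqt (2 * M) (qpoch ('X^2 : {poly R}) (2 * M)) (qpoch 'X^2 M).
  by apply: qpoch_stab2 => //; lia.
have S1' : eqt (2 * M) (Aps (-1) M ^+ 2 * F R 2 M) (thS (-1) (2 * M)).
  apply: eqt_trans S1; apply: eqt_sym; apply: eqt_mul => //; exact: eqt_exp.
set U := thS 1 M \Po 'X^2; set V := - 2%:R * (psiS R M \Po 'X^4).
pose u := thS (1 : R) M \Po 'X^4; pose w := psiS R M \Po 'X^8.
have hU : U \Po 'X^2 = u by rewrite /U -comp_polyA comp_Xn.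
have hV : V \Po 'X^2 = - 2%:R * w.
  by rewrite /V comp_polyM rmorphN rmorph_nat -comp_polyA comp_Xn.
have hPhi : thS (-1) (2 * M) = U \Po 'X^2 + 'X * (V \Po 'X^2).
  by rewrite hU hV dissect; ring.
have hc : F R 2 M = F R 1 M \Po 'X^2 by rewrite F_comp.
have E : eqt (2 * M) (F R 1 (2 * M) ^+ 4) (thS (-1) (2 * M) ^+ 2 * F R 2 M ^+ 2).
  rewrite relA.
  rewrite (_ : (Aps (-1) M * F R 2 M) ^+ 4 = (Aps (-1) M ^+ 2 * F R 2 M) ^+ 2 * F R 2 M ^+ 2); last by ring.
  by apply: eqt_mulr; apply: eqt_exp.
apply: (eqt_trans (eqt_od E)); apply: eqt_eq.
rewrite hc -rmorphXn /= mulrC od_mul_comp hPhi sq_split od_add !od_mul_comp od1 odX mulr0 add0r mulr1.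
by [].
Qed.

End Main.

Section Bp.
Variable R : comNzRingType.

Definition Pd N (a : pred nat) : {poly R} := \prod_(1 <= j < N.+1 | a j) (1 - 'X^j).

Lemma eqt_bigprod M (I : Type) (r : seq I) (P : pred I) (F G : I -> {poly R}) :
  (forall i, P i -> eqt M (F i) (G i)) ->
  eqt M (\prod_(i <- r | P i) F i) (\prod_(i <- r | P i) G i).
Proof.
move=> h; apply: (big_ind2 (fun x y => eqt M x y)) => //.
by move=> x1 x2 y1 y2; apply: eqt_mul.
Qed.

Lemma eqt_prod1 M (I : Type) (r : seq I) (P : pred I) (F : I -> {poly R}) :
  (forall i, P i -> eqt M (F i) 1) -> eqt M (\prod_(i <- r | P i) F i) 1.
Proof.
move=> h; apply: (big_ind (fun x => eqt M x 1)) => // x y hx hy.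
by rewrite -(mulr1 1); apply: eqt_mul.
Qed.

Lemma gt_tel N j : (\sum_(i < N.+1) ('X^(i * j) : {poly R})) * (1 - 'X^j) = 1 - 'X^(N.+1 * j).
Proof.
elim: N => [|N ih]; first by rewrite big_ord1 mul0n expr0 mul1r mul1n.
rewrite big_ord_recr /= mulrDl ih mulrBr mulr1 -exprD.
rewrite (_ : (N.+1 * j + j = N.+2 * j)%N); last by lia.
ring.
Qed.

Lemma map_bpoly k l m N :
  map_poly (intr : int -> R) (bpoly k l m N) =
  \prod_(1 <= j < N.+1 | ~~ (l %| j)%N && ~~ (m %| j)%N) (\sum_(i < N.+1) ('X^(i * j) : {poly R})) ^+ k.
Proof.
rewrite /bpoly rmorph_prod; apply: eq_bigr => j _.
by rewrite rmorphXn /geom_trunc rmorph_sum; congr (_ ^+ _); apply: eq_bigr => i _; rewrite rmorphXn /= map_polyX.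
Qed.

Lemma bpoly_inv k l m N :
  eqt N.+1 (map_poly (intr : int -> R) (bpoly k l m N) *
            Pd N (fun j => ~~ (l %| j)%N && ~~ (m %| j)%N) ^+ k) 1.
Proof.
rewrite map_bpoly /Pd -prodrXl -big_split /=.
rewrite big_nat_cond; apply: eqt_prod1 => j /andP [/andP [hj1 hj2] _].
rewrite -exprMn gt_tel -[X in eqt _ _ X](expr1n _ k); apply: eqt_exp; apply: eqt_Xsub1.
by rewrite leq_pmulr.
Qed.

Lemma Pd_dvd N k : (0 < k)%N -> Pd N (fun j => k %| j)%N = qpoch ('X^k) (N %/ k).
Proof.
move=> hk; elim: N => [|N ih].
  by rewrite /Pd big_geq // div0n /qpoch big_ord0.
rewrite /Pd big_mkcond big_nat_recr //= -big_mkcond -/(Pd N _) ih divnS //.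
case: ifP => hd; last by rewrite add0n mulr1.
rewrite add1n /qpoch big_ord_recr /=; congr (_ * (1 - _)).
rewrite -exprM; congr ('X^_).
by have := divnK hd; rewrite divnS // hd add1n mulnC.
Qed.

Lemma Pd_E1 N l m : Pd N (fun j => 1 %| j)%N =
  Pd N (fun j => ~~ (l %| j)%N && ~~ (m %| j)%N) * Pd N (fun j => (l %| j) || (m %| j))%N.
Proof.
rewrite /Pd (bigID (fun j => (l %| j) || (m %| j))%N) /= mulrC; congr (_ * _).
  by apply: eq_bigl => j; rewrite dvd1n negb_or.
by apply: eq_bigl => j; rewrite dvd1n.
Qed.

Lemma Pd_E2 N l m : coprime l m ->
  Pd N (fun j => l %| j)%N * Pd N (fun j => m %| j)%N =
  Pd N (fun j => (l %| j) || (m %| j))%N * Pd N (fun j => l * m %| j)%N.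
Proof.
move=> cop.
have h1 : Pd N (fun j => l %| j)%N = Pd N (fun j => (l %| j) && (m %| j))%N *
                                     Pd N (fun j => (l %| j) && ~~ (m %| j))%N.
  by rewrite /Pd (bigID (fun j => m %| j)%N).
have h2 : Pd N (fun j => m %| j)%N = Pd N (fun j => (l %| j) && (m %| j))%N *
                                     Pd N (fun j => ~~ (l %| j) && (m %| j))%N.
  rewrite /Pd (bigID (fun j => l %| j)%N); congr (_ * _); apply: eq_bigl => j /=;
  by rewrite andbC.
have h3 : Pd N (fun j => (l %| j) || (m %| j))%N = Pd N (fun j => l %| j)%N *
                                     Pd N (fun j => ~~ (l %| j) && (m %| j))%N.
  rewrite /Pd (bigID (fun j => l %| j)%N); congr (_ * _); apply: eq_bigl => j /=.
    by case: (dvdn l j); case: (dvdn m j).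
  by case: (dvdn l j); case: (dvdn m j).
have h4 : Pd N (fun j => l * m %| j)%N = Pd N (fun j => (l %| j) && (m %| j))%N.
  by apply: eq_bigl => j; rewrite Gauss_dvd.
rewrite h3 h4 h1 h2; ring.
Qed.

Lemma Pd_F N k : (0 < k)%N -> eqt N.+1 (Pd N (fun j => k %| j)%N) (F R k N.+1).
Proof.
move=> hk; rewrite Pd_dvd //; apply: eqt_sym; apply: qpoch_stab2 => //.
  by apply: leq_trans (leq_div N k) _.
have := ltn_pmod N hk; have := divn_eq N k; nia.
Qed.

Lemma bpoly_rel k l m N : coprime l m -> (0 < l)%N -> (0 < m)%N ->
  eqt N.+1 (map_poly (intr : int -> R) (bpoly k l m N) * F R 1 N.+1 ^+ k * F R (l * m) N.+1 ^+ k)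
           (F R l N.+1 ^+ k * F R m N.+1 ^+ k).
Proof.
move=> cop hl hm.
set B := map_poly _ _.
have e1 : eqt N.+1 (Pd N (fun j => 1 %| j)%N) (F R 1 N.+1) by apply: Pd_F.
have el : eqt N.+1 (Pd N (fun j => l %| j)%N) (F R l N.+1) by apply: Pd_F.
have em : eqt N.+1 (Pd N (fun j => m %| j)%N) (F R m N.+1) by apply: Pd_F.
have elm : eqt N.+1 (Pd N (fun j => l * m %| j)%N) (F R (l * m) N.+1).
  by apply: Pd_F; rewrite muln_gt0 hl hm.
apply: (@eqt_trans _ _ _ (B * Pd N (fun j => 1 %| j)%N ^+ k * Pd N (fun j => l * m %| j)%N ^+ k)).
  by apply: eqt_sym; apply: eqt_mul; [apply: eqt_mul => //|]; apply: eqt_exp.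
apply: (@eqt_trans _ _ _ (Pd N (fun j => l %| j)%N ^+ k * Pd N (fun j => m %| j)%N ^+ k)); last first.
  by apply: eqt_mul; apply: eqt_exp.
rewrite (Pd_E1 N l m).
have -> : B * (Pd N (fun j => ~~ (l %| j)%N && ~~ (m %| j)%N) * Pd N (fun j => (l %| j) || (m %| j))%N) ^+ k *
   Pd N (fun j => l * m %| j)%N ^+ k =
   (B * Pd N (fun j => ~~ (l %| j)%N && ~~ (m %| j)%N) ^+ k) *
   (Pd N (fun j => (l %| j) || (m %| j))%N * Pd N (fun j => l * m %| j)%N) ^+ k by rewrite !exprMn !mulrA.
rewrite -Pd_E2 // -exprMn -[X in eqt _ _ X]mul1r; apply: eqt_mulr.
exact: bpoly_inv.
Qed.

End Bp.

Lemma intr_Z3 (z : int) : (z%:~R : 'Z_3) = ((z %% 3)%Z)%:~R.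
Proof.
rewrite {1}(divz_eq z 3) rmorphD rmorphM /=.
have -> : ((3 : int)%:~R : 'Z_3) = 0 by apply/eqP.
by rewrite mulr0 add0r.
Qed.
Lemma mod3_cases (z : int) : exists2 a : nat, (z %% 3)%Z = a & (a < 3)%N.
Proof.
have h1 := modz_ge0 z (isT : (3 : int) != 0).
have h2 := ltz_pmod z (isT : (0 : int) < 3).
case: (z %% 3)%Z h1 h2 => [a|a] //= h1 h2; exists a => //.
Qed.
Lemma intr_Z3_mod (x y : int) : (x%:~R : 'Z_3) = y%:~R -> (x = y %[mod 3])%Z.
Proof.
rewrite (intr_Z3 x) (intr_Z3 y).
have [a -> ha] := mod3_cases x; have [b -> hb] := mod3_cases y.
rewrite -!pmulrn => h; congr Posz.
by case: a ha h => [|[|[|a]]] //; case: b hb => [|[|[|b]]] // _ _ /eqP.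
Qed.

Lemma three0 : (3%:R : {poly 'Z_3}) = 0.
Proof. by rewrite -polyC_natr (_ : (3%:R : 'Z_3) = 0) ?polyC0 //; apply/eqP. Qed.

Lemma frob3 e : (1 - 'X^e : {poly 'Z_3}) ^+ 3 = 1 - 'X^(3 * e).
Proof.
have -> : (1 - 'X^e : {poly 'Z_3}) ^+ 3 = 1 - ('X^e) ^+ 3 - 3%:R * ('X^e - ('X^e) ^+ 2) by ring.
by rewrite three0 mul0r subr0 -exprM mulnC.
Qed.

Lemma F3k k L : F 'Z_3 (3 * k) L = F 'Z_3 k L ^+ 3.
Proof.
rewrite /F !qpoch_Xk -prodrXl; apply: eq_bigr => i _.
by rewrite frob3 mulnA.
Qed.

Lemma coef0_exp (p : {poly 'Z_3}) m : p`_0 = 1 -> (p ^+ m)`_0 = 1.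
Proof.
move=> h; elim: m => [|m ih]; first by rewrite expr0 coef1.
by rewrite exprS coef0M h ih mulr1.
Qed.

Lemma coef0F k L : (0 < k)%N -> (F 'Z_3 k L)`_0 = 1.
Proof. by move=> hk; apply: qpoch_coef0. Qed.

Lemma B_rel N : eqt N.+1 (map_poly (intr : int -> 'Z_3) (bpoly 2 3 8 N) * F 'Z_3 8 N.+1 ^+ 4)
                        (F 'Z_3 1 N.+1 ^+ 4).
Proof.
have H := @bpoly_rel 'Z_3 2 3 8 N isT isT isT.
have h3 : F 'Z_3 3 N.+1 = F 'Z_3 1 N.+1 ^+ 3 := F3k 1 N.+1.
rewrite F3k h3 in H.
set B := map_poly _ _ in H *; set F1 := F 'Z_3 1 N.+1 in H h3 *; set F8 := F 'Z_3 8 N.+1 in H *.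
apply: (@eqt_cancel _ _ _ _ (F1 ^+ 2 * F8 ^+ 2)).
  by rewrite coef0M !coef0_exp ?mulr1 // coef0F.
have -> : B * F8 ^+ 4 * (F1 ^+ 2 * F8 ^+ 2) = B * F1 ^+ 2 * (F8 ^+ 3) ^+ 2 by ring.
have -> : F1 ^+ 4 * (F1 ^+ 2 * F8 ^+ 2) = (F1 ^+ 3) ^+ 2 * F8 ^+ 2 by ring.
exact: H.
Qed.

Lemma C_rel n : eqt n.+1 (map_poly (intr : int -> 'Z_3) (bpoly 1 2 3 n) * F 'Z_3 2 n.+1 ^+ 2)
                        (F 'Z_3 1 n.+1 ^+ 2).
Proof.
have H := @bpoly_rel 'Z_3 1 2 3 n isT isT isT.
have h3 : F 'Z_3 3 n.+1 = F 'Z_3 1 n.+1 ^+ 3 := F3k 1 n.+1.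
have h6 : F 'Z_3 (2 * 3) n.+1 = F 'Z_3 2 n.+1 ^+ 3 := F3k 2 n.+1.
rewrite h6 h3 !expr1 in H.
set C := map_poly _ _ in H *; set F1 := F 'Z_3 1 n.+1 in H h3 *; set F2 := F 'Z_3 2 n.+1 in H h6 *.
apply: (@eqt_cancel _ _ _ _ (F1 * F2)).
  by rewrite coef0M !coef0F ?mulr1.
have -> : C * F2 ^+ 2 * (F1 * F2) = C * F1 * F2 ^+ 3 by ring.
have -> : F1 ^+ 2 * (F1 * F2) = F2 * F1 ^+ 3 by ring.
exact: H.
Qed.

Lemma key_odd n :
  eqt n.+1 (od (map_poly (intr : int -> 'Z_3) (bpoly 2 3 8 (2 * n + 1))))
           (- 4%:R * map_poly (intr : int -> 'Z_3) (bpoly 1 2 3 n)).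
Proof.
set M := n.+1.
have eL : ((2 * n + 1).+1 = 2 * M)%N by rewrite /M; lia.
have HB := @B_rel (2 * n + 1)%N; rewrite eL in HB.
set B := map_poly _ (bpoly 2 3 8 _) in HB *.
set C := map_poly _ (bpoly 1 2 3 _).
have HO := @OddF 'Z_3 M.
have HC : eqt M (C * F 'Z_3 2 M ^+ 2) (F 'Z_3 1 M ^+ 2) := @C_rel n.
have h8 : F 'Z_3 8 (2 * M) = F 'Z_3 4 (2 * M) \Po 'X^2 by rewrite F_comp.
have HodB := eqt_od HB.
rewrite h8 -rmorphXn /= mulrC od_mul_comp in HodB.
have h4 : eqt M (F 'Z_3 4 (2 * M)) (F 'Z_3 4 M) by apply: qpoch_stab2 => //; lia.
have YC := eqt_le (leq_pmull M (ltn0Sn 1)) (eqt_comp2 (@Yid 'Z_3 M)).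
have c1 : (2%:R * (thS 1 M * (psiS 'Z_3 M \Po 'X^2) * F 'Z_3 1 M ^+ 2)) \Po 'X^2 =
          2%:R * ((thS 1 M \Po 'X^2) * (psiS 'Z_3 M \Po 'X^4) * F 'Z_3 2 M ^+ 2).
  rewrite comp_polyM rmorph_nat comp_polyM rmorphXn /= comp_polyM -comp_polyA comp_Xn F_comp //.
have c2 : (2%:R * F 'Z_3 2 M ^+ 4) \Po 'X^2 = 2%:R * F 'Z_3 4 M ^+ 4.
  by rewrite comp_polyM rmorph_nat rmorphXn /= F_comp.
rewrite c1 c2 in YC.
set F1 := F 'Z_3 1 M in HO HC YC *; set F2 := F 'Z_3 2 M in HC YC *.
set F4 := F 'Z_3 4 M in h4 YC *.
set U := thS 1 M \Po 'X^2 in HO YC *; set W := psiS 'Z_3 M \Po 'X^4 in HO YC *.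
apply: (@eqt_cancel _ _ _ _ (F4 ^+ 4 * F2 ^+ 2)).
  have c4 : F4`_0 = 1 by rewrite /F4 coef0F.
  have c2' : F2`_0 = 1 by rewrite /F2 coef0F.
  by rewrite coef0M !coef0_exp ?mulr1.
have S1 : eqt M (F4 ^+ 4 * od B) (F1 ^+ 2 * (2%:R * (U * (- 2%:R * W)))).
  apply: eqt_trans HO; apply: eqt_trans HodB; apply: eqt_mulr; apply: eqt_exp.
  exact: eqt_sym.
apply: (@eqt_trans _ _ _ ((F1 ^+ 2 * (2%:R * (U * (- 2%:R * W)))) * F2 ^+ 2)).
  by rewrite mulrA [od B * _]mulrC; apply: eqt_mulr.
apply: (@eqt_trans _ _ _ (- 2%:R * F1 ^+ 2 * (2%:R * F4 ^+ 4))).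
  have -> : F1 ^+ 2 * (2%:R * (U * (- 2%:R * W))) * F2 ^+ 2 =
            - 2%:R * F1 ^+ 2 * (2%:R * (U * W * F2 ^+ 2)) by ring.
  by apply: eqt_mull.
apply: (@eqt_trans _ _ _ (- 4%:R * (C * F2 ^+ 2) * F4 ^+ 4)).
  have -> : - 2%:R * F1 ^+ 2 * (2%:R * F4 ^+ 4) = - 4%:R * F1 ^+ 2 * F4 ^+ 4 by ring.
  by apply: eqt_mulr; apply: eqt_mull; apply: eqt_sym.
by apply: eqt_eq; ring.
Qed.

Unset Implicit Arguments.
Set Strict Implicit.

Theorem mainTheorem6 (n : nat) :
  (0 < n)%N ->
  (bklm 2 3 8 (2 * n + 1) = 2 * bklm 1 2 3 n %[mod 3])%Z.
Proof.
move=> _; apply: intr_Z3_mod.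
have h := key_odd (ltnSn n).
rewrite coef_od mulNr coefN (mulr_natl (map_poly (intr : int -> 'Z_3) (bpoly 1 2 3 n)) 4) coefMn in h.
rewrite !coef_map /= addn1 in h.
rewrite /bklm addn1 h rmorphM /=.
have -> : ((2 : int)%:~R : 'Z_3) = - (4%:R) by apply/eqP.
by rewrite mulNr mulrC mulr_natr.
Qed.
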